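(* For every $\mathbf z\in[0,1]^{N_e}$ one has $J(\mathbb H(\mathbf z))\le J(\mathbf z)$, where $J$ is the objective function defined in the context.
   Context: Fix integers $N_x,N_y,N_e\ge1$, event data $\mathbf x\in\{1,\dots,N_x\}^{N_e}$, $\mathbf y\in\{1,\dots,N_y\}^{N_e}$, $\mathbf t\in\mathbb R^{N_e}$ (event $k$ occurs at pixel $(x_k,y_k)$ at time $t_k$), a reference time $t_0\in\mathbb R$ and parameters $\lambda_1,\lambda_2\ge 0$. Let $\Omega=\{1,\dots,N_x\}\times\{1,\dots,N_y\}$ and $\mathbf b=(1,\dots,1)^\top\in\mathbb R^{N_e}$. The Heaviside function is $\mathbb H(s)=1$ if $s>0$, $\mathbb H(s)=0$ if $s\le0$, applied componentwise; $\odot$ is the Hadamard product. Convention: any quotient whose denominator vanishes is set to $0$, and $0\log 0=0$. For $\mathbf z\in\mathbb R^{N_e}$ let $\mathbf h=\mathbb H(\mathbf z)$, $n(\mathbf z)=\sum_k h_k$, $\mu_t(\mathbf z)=\mathbf h^\top\mathbf t/n(\mathbf z)$, $\mu_x(\mathbf z)=\mathbf h^\top\mathbf x/n(\mathbf z)$, $\mu_y(\mathbf z)=\mathbf h^\top\mathbf y/n(\mathbf z)$, $\theta_x(\mathbf z)=\dfrac{\mathbf h^\top\big((\mathbf t-\mu_t(\mathbf z)\mathbf b)\odot(\mathbf x-\mu_x(\mathbf z)\mathbf b)\big)}{\mathbf h^\top\big((\mathbf t-\mu_t(\mathbf z)\mathbf b)\odot(\mathbf t-\mu_t(\mathbf z)\mathbf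 b)\big)}$, and $\theta_y(\mathbf z)$ the same with $\mathbf y,\mu_y$ in place of $\mathbf x,\mu_x$. Warped event positions: $w_k(\mathbf z)=\big(x_k+(t_0-t_k)\theta_x(\mathbf z),\;y_k+(t_0-t_k)\theta_y(\mathbf z)\big)\in\mathbb R^2$. Let $\delta(0)=1$ and $\delta(\gamma)=0$ for $\gamma\neq0$. Image of warped events at pixel $(\hat x,\hat y)\in\Omega$: $I_{(\hat x,\hat y)}(\mathbf z)=\sum_{k=1}^{N_e} z_k\,\delta\big(\|w_k(\mathbf z)-(\hat x,\hat y)\|_2\big)$. Entropy: $E(\mathbf z)=\sum_{(\hat x,\hat y)\in\Omega} I_{(\hat x,\hat y)}(\mathbf z)\log I_{(\hat x,\hat y)}(\mathbf z)$. Variance terms: $V(\mathbf z,\mathbf x)=\frac1{N_x}\|\mathbf h\odot\mathbf x-\mu_x(\mathbf z)\mathbf b\|_2^2$, $V(\mathbf z,\mathbf y)=\frac1{N_x}\|\mathbf h\odot\mathbf y-\mu_y(\mathbf z)\mathbf b\|_2^2$. Objective: $J(\mathbf z)=-E(\mathbf z)+\frac{\lambda_1}{2}\big(V(\mathbf z,\mathbf x)+V(\mathbf z,\mathbf y)\big)+\frac{\lambda_2}{2}\|\mathbb H(\mathbf z)\|_2^2$. *)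

(* Defs.v *)
From HB Require Import structures.
From mathcomp Require Import all_boot all_order all_algebra.
From mathcomp Require Import all_classical all_reals.
From mathcomp Require Import exp.
Set Implicit Arguments. Unset Strict Implicit. Unset Printing Implicit Defensive.
Import Order.TTheory GRing.Theory Num.Theory.
Local Open Scope ring_scope.

Section Objective.
Variable R : realType.
(* N_x, N_y, N_e; event data x, y (pixel coordinates, natural numbers), t;
   reference time t0; parameters lambda1, lambda2. Events are indexed by 'I_Ne. *)
Variables (Nx Ny Ne : nat) (x y : 'I_Ne -> nat) (t : 'I_Ne -> R) (t0 l1 l2 : R).

Definition heav (s : R) : R := if 0 < s then 1 else 0.
Definition Hv (z : 'I_Ne -> R) : 'I_Ne -> R := fun k => heav (z k).

Definition sdiv (a b : R) : R := if b == 0 then 0 else a / b.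

Definition xr (k : 'I_Ne) : R := (x k)%:R.
Definition yr (k : 'I_Ne) : R := (y k)%:R.

Definition nev (z : 'I_Ne -> R) : R := \sum_k Hv z k.
Definition mu (v : 'I_Ne -> R) (z : 'I_Ne -> R) : R :=
  sdiv (\sum_k Hv z k * v k) (nev z).
Definition theta (v : 'I_Ne -> R) (z : 'I_Ne -> R) : R :=
  sdiv (\sum_k Hv z k * ((t k - mu t z) * (v k - mu v z)))
       (\sum_k Hv z k * ((t k - mu t z) * (t k - mu t z))).

Definition warp (z : 'I_Ne -> R) (k : 'I_Ne) : R * R :=
  (xr k + (t0 - t k) * theta xr z, yr k + (t0 - t k) * theta yr z).

Definition delta (g : R) : R := if g == 0 then 1 else 0.

Definition img (z : 'I_Ne -> R) (px py : R) : R :=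
  \sum_k z k * delta (Num.sqrt (((warp z k).1 - px) ^+ 2 + ((warp z k).2 - py) ^+ 2)).

Definition xlogx (a : R) : R := if a == 0 then 0 else a * ln a.

(* entropy: sum over pixels (i+1, j+1), i < Nx, j < Ny, i.e. over Omega *)
Definition entropy (z : 'I_Ne -> R) : R :=
  \sum_(i < Nx) \sum_(j < Ny) xlogx (img z (i.+1)%:R (j.+1)%:R).

Definition var (v : 'I_Ne -> R) (z : 'I_Ne -> R) : R :=
  (Nx%:R)^-1 * \sum_k (Hv z k * v k - mu v z) ^+ 2.

Definition J (z : 'I_Ne -> R) : R :=
  - entropy z + l1 / 2 * (var xr z + var yr z) + l2 / 2 * \sum_k (Hv z k) ^+ 2.

End Objective.

(* Main.v *)
Require Import Defs.
From HB Require Import structures.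
From mathcomp Require Import all_boot all_order all_algebra.
From mathcomp Require Import all_classical all_reals.
From mathcomp Require Import exp.
Import Order.TTheory GRing.Theory Num.Theory.
Local Open Scope ring_scope.

Lemma xlogx_le (R : realType) (a n : R) :
  0 <= a -> a <= n -> (n = 0 \/ 1 <= n) -> xlogx a <= xlogx n.
Proof.
move=> a0 an [n0|n1].
  have -> : a = 0 by apply/eqP; rewrite eq_le a0 andbT -n0.
  by rewrite n0.
have nn0 : n != 0 by rewrite gt_eqF // (lt_le_trans ltr01 n1).
have hn : 0 <= xlogx n.
  by rewrite /xlogx (negbTE nn0) mulr_ge0 ?ln_ge0 // (le_trans ler01 n1).
rewrite /xlogx; case: eqP => [_|/eqP a0'] //.
rewrite (negbTE nn0).
have ap : 0 < a by rewrite lt_def a0' a0.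
have [a1|a1] := leP a 1.
  rewrite /xlogx (negbTE nn0) in hn; apply: (le_trans _ hn).
  by rewrite mulr_ge0_le0 ?ln_le0 // ltW.
have np : 0 < n by apply: lt_le_trans an.
apply: ler_pM => //.
  by rewrite ln_ge0 // ltW.
by rewrite ler_ln // posrE.
Qed.

Lemma heavK (R : realType) (s : R) : heav (heav s) = heav s.
Proof. by rewrite /heav; case: (0 < s); rewrite ?ltr01 ?ltxx. Qed.

Lemma HvK (R : realType) (Ne : nat) (z : 'I_Ne -> R) : Hv (Hv z) = Hv z.
Proof. by apply: funext => k; rewrite /Hv heavK. Qed.

Lemma key (R : realType) (Ne : nat) (z : 'I_Ne -> R) (d : 'I_Ne -> R) :
  (forall k, 0 <= z k <= 1) -> (forall k, d k = 0 \/ d k = 1) ->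
  xlogx (\sum_k z k * d k) <= xlogx (\sum_k Hv z k * d k).
Proof.
move=> hz d01.
have h01 : forall k, Hv z k = 0 \/ Hv z k = 1.
  by move=> k; rewrite /Hv /heav; case: ifP; [right|left].
apply: xlogx_le.
- apply: sumr_ge0 => k _; have /andP[z0 _] := hz k.
  by case: (d01 k) => ->; rewrite ?mulr0 ?mulr1.
- apply: ler_sum => k _; apply: ler_wpM2r.
    by case: (d01 k) => ->; rewrite ?ler01.
  have /andP[z0 z1] := hz k; rewrite /Hv /heav; case: ifP => // /negbT.
  by rewrite -leNgt.
- have [n ->] : exists n : nat, \sum_k Hv z k * d k = n%:R.
    elim/big_ind: _.
    + by exists 0%N.
    + by move=> a b [m ->] [p ->]; exists (m + p)%N; rewrite natrD.
    + move=> k _; case: (h01 k) => ->; first by exists 0%N; rewrite mul0r.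
      by case: (d01 k) => ->; [exists 0%N|exists 1%N]; rewrite ?mulr0 ?mulr1.
  by case: n => [|n]; [left|right; rewrite ler1n].
Qed.

Theorem mainTheorem3 (R : realType) (Nx Ny Ne : nat)
  (hNx : (1 <= Nx)%N) (hNy : (1 <= Ny)%N) (hNe : (1 <= Ne)%N)
  (x y : 'I_Ne -> nat) (t : 'I_Ne -> R) (t0 l1 l2 : R)
  (hx : forall k, (1 <= x k <= Nx)%N) (hy : forall k, (1 <= y k <= Ny)%N)
  (hl1 : 0 <= l1) (hl2 : 0 <= l2)
  (z : 'I_Ne -> R) (hz : forall k, 0 <= z k <= 1) :
  J Nx Ny x y t t0 l1 l2 (Hv z) <= J Nx Ny x y t t0 l1 l2 z.
Proof.
rewrite /J /var /mu /nev HvK !lerD2r lerN2.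
apply: ler_sum => i _; apply: ler_sum => j _.
have hw : forall k, warp x y t t0 (Hv z) k = warp x y t t0 z k.
  by move=> k; rewrite /warp /theta /mu /nev HvK.
have hwf : warp x y t t0 (Hv z) = warp x y t t0 z by apply: funext.
rewrite /img hwf.
lazymatch goal with |- context [fun k => BigBody k _ _ (z k * @?F k)] => pose D := F end.
have hD : forall k, D k = 0 \/ D k = 1.
  by move=> k; rewrite /D /delta; case: ifP; [right|left].
exact: (@key R Ne z D hz hD).
Qed.
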